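(* Let $k$ be a field, $R=k[x_1,\dots,x_d]$ a standard graded polynomial ring, and $I=(\alpha_1,\dots,\alpha_m)\subset R$ a perfect ideal of height $2$ with $m>d$ such that, with respect to $\alpha_1,\dots,\alpha_m$, $I$ has a Hilbert–Burch matrix $\varphi=[v_1|\cdots|v_{m-1}]$ with $v_i\in(R_1)^m$ for $1\le i\le m-2$ and $v_{m-1}\in(R_n)^m$ for some $n\ge1$. Assume $I$ satisfies $G_d$. Then in the ring $A$ (inside its fraction field) \[\frac{\overline g\,\overline K^{\,n}}{\overline{x_d}^{\,n}}\subseteq\overline{\mathcal L+I_d(B_n(\varphi))}.\]
   Context: $G_d$: $\mu(I_P)\le\operatorname{ht}P$ for all primes $P\supseteq I$ with $\operatorname{ht}P<d$. $S=R[T_1,\dots,T_m]$, bigraded by $\deg x_i=(1,0)$, $\deg T_j=(0,1)$. Write $[T_1\cdots T_m]\cdot\varphi=[L_1\cdots L_{m-2}\ g]$, $\mathcal L=(L_1,\dots,L_{m-2},g)$. Let $B(\varphi')$ be the $d\times(m-2)$ matrix of linear forms in $k[T_1,\dots,T_m]$ with $[x_1\cdots x_d]\cdot B(\varphi')=[L_1\cdots L_{m-2}]$; $J=(L_1,\dots,L_{m-2})+I_d(B(\varphi'))$, $A=S/J$ (a domain), bars denote images in $A$; $B$ is $B(\varphi')$ with last row deleted; $K=(L_1,\dots,L_{m-2})+I_{d-1}(B)+(x_d)$. Iterated Jacobian duals with respect to $x_1,\dots,x_d$: $B_1(\varphi)$ is a $d\times(m-1)$ matrix with bihomogeneous entries,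 of constant bidegree along each column, with $[x_1\cdots x_d]\cdot B_1(\varphi)=[T_1\cdots T_m]\cdot\varphi$, and $\mathcal L_1=\mathcal L$. Given $B_{i-1}(\varphi)$ and $\mathcal L_{i-1}$ = ideal generated by the entries of $[x_1\cdots x_d]\cdot B_{i-1}(\varphi)$, choose bihomogeneous $u_1,\dots,u_l$ with $\mathcal L_{i-1}+(I_d(B_{i-1}(\varphi))\cap(x_1,\dots,x_d))=\mathcal L_{i-1}+(u_1,\dots,u_l)$, a matrix $C$ with bihomogeneous entries of constant bidegree along each column with $[u_1\cdots u_l]=[x_1\cdots x_d]\cdot C$, and set $B_i(\varphi)=[B_{i-1}(\varphi)|C]$. (The ideal $\mathcal L+I_d(B_i(\varphi))$ is independent of these choices.) *)

(* Defs.v *)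
From HB Require Import structures.
From mathcomp Require Import all_boot all_order all_algebra.
From mathcomp Require Import mpoly.
Set Implicit Arguments.
Unset Strict Implicit.
Unset Printing Implicit Defensive.
Import GRing.Theory.
Local Open Scope ring_scope.

Section Ideals.
Variable A : comNzRingType.

Definition ideal_span (P : A -> Prop) : A -> Prop :=
  fun f => exists (n : nat) (c g : 'I_n -> A),
    (forall i, P (g i)) /\ f = \sum_(i < n) c i * g i.

Definition fam_ideal (n : nat) (a : 'I_n -> A) : A -> Prop :=
  ideal_span (fun f => exists i, f = a i).

Definition ideal_add (P Q : A -> Prop) : A -> Prop :=
  ideal_span (fun f => P f \/ Q f).

Definition ideal_pow (P : A -> Prop) (n : nat) : A -> Prop :=
  ideal_span (fun f => exists ks : 'I_n -> A,
    (forall i, P (ks i)) /\ f = \prod_(i < n) ks i).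

Definition ideal_sub (P Q : A -> Prop) : Prop := forall f, P f -> Q f.

Definition is_ideal (P : A -> Prop) : Prop :=
  [/\ P 0, (forall a b, P a -> P b -> P (a + b)) & (forall r a, P a -> P (r * a))].

Definition is_prime (P : A -> Prop) : Prop :=
  [/\ is_ideal P, ~ P 1 & (forall a b, P (a * b) -> P a \/ P b)].

Definition prime_chain (h : nat) (C : 'I_h.+1 -> A -> Prop) : Prop :=
  (forall i, is_prime (C i)) /\
  (forall i : 'I_h, ideal_sub (C (widen_ord (leqnSn h) i)) (C (lift ord0 i)) /\
                    ~ ideal_sub (C (lift ord0 i)) (C (widen_ord (leqnSn h) i))).

Definition prime_height (P : A -> Prop) (h : nat) : Prop :=
  (exists C : 'I_h.+1 -> A -> Prop,
      prime_chain C /\ forall f, C ord_max f <-> P f) /\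
  ~ (exists C : 'I_h.+2 -> A -> Prop,
      prime_chain C /\ forall f, C ord_max f <-> P f).

Definition ideal_height (I : A -> Prop) (h : nat) : Prop :=
  (exists P, [/\ is_prime P, ideal_sub I P & prime_height P h]) /\
  (forall P h', is_prime P -> ideal_sub I P -> prime_height P h' -> (h <= h')%N).

(* mu(I_P) <= h, for I = (a_0,...,a_{m-1}) and P prime: I_P is generated by
   h elements, i.e. there are b_1..b_h in I and s outside P with s I <= (b). *)
Definition mu_loc_le (m : nat) (a : 'I_m -> A) (P : A -> Prop) (h : nat) : Prop :=
  exists (b : 'I_h -> A) (s : A),
    [/\ forall j, fam_ideal a (b j), ~ P s &
        forall i, fam_ideal b (s * a i)].

Definition G_cond (d m : nat) (a : 'I_m -> A) : Prop :=
  forall P h, is_prime P -> ideal_sub (fam_ideal a) P -> prime_height P h ->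
    (h < d)%N -> mu_loc_le a P h.

Definition minors_ideal (t r c : nat) (M : 'M[A]_(r, c)) : A -> Prop :=
  ideal_span (fun f => exists (ri : 'I_t -> 'I_r) (ci : 'I_t -> 'I_c),
    [/\ injective ri, injective ci &
        f = \det (\matrix_(i, j) M (ri i) (ci j))]).

(* 0 -> A^c --phi--> A^m --[a]--> I -> 0 is exact, and ht I = 2:
   I is perfect of height 2 with Hilbert-Burch matrix phi w.r.t. a *)
Definition HB_perfect_ht2 (m c : nat) (a : 'rV[A]_m) (phi : 'M[A]_(m, c)) : Prop :=
  [/\ a *m phi = 0,
      (forall w : 'cV[A]_m, a *m w = 0 -> exists y : 'cV[A]_c, w = phi *m y),
      (forall y : 'cV[A]_c, phi *m y = 0 -> y = 0) &
      ideal_height (fam_ideal (fun i => a 0 i)) 2].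

End Ideals.

Lemma pred_ltn (d : nat) : (0 < d)%N -> (d.-1 < d)%N.
Proof. by case: d. Qed.

Definition last_ord (d : nat) (hd : (0 < d)%N) : 'I_d := Ordinal (pred_ltn hd).

(* R = k[x_1..x_d] = {mpoly k[d]},  S = R[T_1..T_m] = {mpoly k[d + m]} *)
Section Rings.
Variables (k : fieldType) (d m : nat).

Local Notation R := {mpoly k[d]}.
Local Notation S := {mpoly k[d + m]}.

Definition std_homog (e : nat) (p : R) : Prop :=
  forall mo, mo \in msupp p -> mdeg mo = e.

Definition xvar (i : 'I_d) : S := 'X_(lshift m i).
Definition Tvar (j : 'I_m) : S := 'X_(rshift d j).

Definition incl_RS (p : R) : S := p \mPo [tuple xvar i | i < d].

Definition xdeg (mo : 'X_{1..d + m}) : nat := (\sum_(i < d) mo (lshift m i))%N.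
Definition Tdeg (mo : 'X_{1..d + m}) : nat := (\sum_(j < m) mo (rshift d j))%N.

Definition bihomog (a b : nat) (p : S) : Prop :=
  forall mo, mo \in msupp p -> xdeg mo = a /\ Tdeg mo = b.

Definition is_bihomog (p : S) : Prop := exists a b, bihomog a b p.

Definition col_bihomog (r c : nat) (M : 'M[S]_(r, c)) : Prop :=
  forall j, exists a b, forall i, bihomog a b (M i j).

Definition xvec : 'rV[S]_d := \row_i xvar i.
Definition Tvec : 'rV[S]_m := \row_j Tvar j.

Definition xideal : S -> Prop := fam_ideal xvar.

Definition Lof (c : nat) (B : 'M[S]_(d, c)) : S -> Prop :=
  fam_ideal (fun j => (xvec *m B) 0 j).

(* IJD phi i B : B is a (valid choice of) i-th iterated Jacobian dual
   B_i(phi) of phi with respect to x_1, ..., x_d. *)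
Inductive IJD (c0 : nat) (phi : 'M[R]_(m, c0)) : nat -> forall c, 'M[S]_(d, c) -> Prop :=
| IJD_1 (B : 'M[S]_(d, c0)) :
    col_bihomog B -> xvec *m B = Tvec *m map_mx incl_RS phi -> IJD phi 1 B
| IJD_S (i c : nat) (B : 'M[S]_(d, c)) (l : nat) (u : 'I_l -> S) (C : 'M[S]_(d, l)) :
    IJD phi i B ->
    (forall j, is_bihomog (u j)) ->
    (forall f, ideal_add (Lof B) (fun f => minors_ideal d B f /\ xideal f) f <->
               ideal_add (Lof B) (fam_ideal u) f) ->
    col_bihomog C ->
    (forall j, (xvec *m C) 0 j = u j) ->
    IJD phi i.+1 (row_mx B C).

End Rings.

(* Main.v *)
Require Import Defs.
From HB Require Import structures.
From mathcomp Require Import all_boot all_order all_algebra.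
From mathcomp Require Import mpoly.
Set Implicit Arguments.
Unset Strict Implicit.
Unset Printing Implicit Defensive.
Import GRing.Theory.
Local Open Scope ring_scope.
From mathcomp Require Import ring.
Section IdealLemmas.
Variable A : comNzRingType.
Implicit Types P Q I : A -> Prop.

Lemma span_gen P f : P f -> ideal_span P f.
Proof.
move=> Pf; exists 1%N, (fun _ => 1), (fun _ => f); split=> //.
by rewrite big_ord1 mul1r.
Qed.

Lemma span0 P : ideal_span P 0.
Proof.
exists 0%N, (fun _ => 0), (fun _ => 0); split; first by case.
by rewrite big_ord0.
Qed.

Lemma spanD P a b : ideal_span P a -> ideal_span P b -> ideal_span P (a + b).
Proof.
move=> [n1 [c1 [g1 [H1 ->]]]] [n2 [c2 [g2 [H2 ->]]]].
exists (n1 + n2)%N,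
  (fun i => match split i with inl a => c1 a | inr b => c2 b end),
  (fun i => match split i with inl a => g1 a | inr b => g2 b end); split.
  by move=> i; case: (split i).
rewrite big_split_ord /=; congr (_ + _); apply: eq_bigr => i _.
  by rewrite (unsplitK (inl _ i)).
by rewrite (unsplitK (inr _ i)).
Qed.

Lemma spanM P r a : ideal_span P a -> ideal_span P (r * a).
Proof.
move=> [n1 [c1 [g1 [H1 ->]]]].
exists n1, (fun i => r * c1 i), g1; split=> //.
by rewrite mulr_sumr; apply: eq_bigr => i _; rewrite mulrA.
Qed.

Lemma span_ideal P : is_ideal (ideal_span P).
Proof. split; [exact: span0 | exact: spanD | exact: spanM]. Qed.

Lemma ideal_sum I (n : nat) (F : 'I_n -> A) :
  is_ideal I -> (forall i, I (F i)) -> I (\sum_(i < n) F i).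
Proof.
move=> [I0 ID IM] HF; apply: (big_ind I) => //.
Qed.

Lemma span_min P I : is_ideal I -> (forall f, P f -> I f) ->
  forall f, ideal_span P f -> I f.
Proof.
move=> HI HP f [n [c [g [Hg ->]]]]; apply: ideal_sum => // i.
by case: HI => _ _ HM; apply: HM; apply: HP.
Qed.

Lemma idealB I a b : is_ideal I -> I a -> I b -> I (a - b).
Proof.
move=> [I0 ID IM] Ha Hb; apply: ID => //.
by rewrite -mulN1r; apply: IM.
Qed.

Lemma idealMr I a r : is_ideal I -> I a -> I (a * r).
Proof. by move=> [_ _ IM] Ha; rewrite mulrC; apply: IM. Qed.

Lemma add_l P Q f : P f -> ideal_add P Q f.
Proof. by move=> Pf; apply: span_gen; left. Qed.

Lemma add_r P Q f : Q f -> ideal_add P Q f.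
Proof. by move=> Qf; apply: span_gen; right. Qed.

Lemma add_ideal P Q : is_ideal (ideal_add P Q).
Proof. exact: span_ideal. Qed.

Lemma add_decomp P Q f : is_ideal P -> is_ideal Q -> ideal_add P Q f ->
  exists a b, [/\ P a, Q b & f = a + b].
Proof.
move=> [P0 PD PM] [Q0 QD QM] Hf.
have HI : is_ideal (fun f => exists a b, [/\ P a, Q b & f = a + b]).
  split.
  + by exists 0, 0; rewrite addr0.
  + move=> x y [a1 [b1 [? ? ->]]] [a2 [b2 [? ? ->]]].
    exists (a1 + a2), (b1 + b2); split; [exact: PD|exact: QD|].
    by rewrite addrACA.
  + move=> r x [a1 [b1 [? ? ->]]]; exists (r * a1), (r * b1); split;
      [exact: PM|exact: QM|by rewrite mulrDr].
apply: (span_min HI _ Hf).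
move=> x [Px|Qx]; [exists x, 0|exists 0, x]; split=> //; rewrite ?addr0 ?add0r //.
Qed.

Lemma fam_gen (n : nat) (a : 'I_n -> A) i : fam_ideal a (a i).
Proof. by apply: span_gen; exists i. Qed.


Lemma prod_span (G : A -> Prop) N (ks : 'I_N -> A) : (forall a, ideal_span G (ks a)) ->
  ideal_span (fun f => exists gs : 'I_N -> A, (forall a, G (gs a)) /\ f = \prod_(a < N) gs a)
    (\prod_(a < N) ks a).
Proof.
elim: N ks => [|N IH] ks H.
  apply: span_gen; exists (fun _ => 0); split; first by case.
  by rewrite !big_ord0.
rewrite big_ord_recr /=.
have H1 := IH _ (fun a => H (widen_ord (leqnSn N) a)).
have H2 := H ord_max.
set y := ks ord_max in H2 *.
move: H1; set x := \prod_(i < N) _ => H1.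
pose PN := fun f => exists gs : 'I_N.+1 -> A, (forall a, G (gs a)) /\ f = \prod_(a < N.+1) gs a.
have Hw a : widen_ord (leqnSn N) a = lift ord_max a.
  by apply/val_inj; rewrite /= /bump leqNgt ltn_ord add0n.
have TI (z : A) : is_ideal (fun x => ideal_span PN (x * z)).
  split.
  - by rewrite mul0r; exact: span0.
  - by move=> a b Ha Hb; rewrite mulrDl; exact: spanD.
  - by move=> r a Ha; rewrite -mulrA; exact: spanM.
apply: (span_min (TI y) _ H1) => x' [gs [Hgs ->]].
have TI2 : is_ideal (fun z => ideal_span PN (\prod_(a < N) gs a * z)).
  split.
  - by rewrite mulr0; exact: span0.
  - by move=> a b Ha Hb; rewrite mulrDr; exact: spanD.
  - by move=> r a Ha; rewrite mulrCA; exact: spanM.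
apply: (span_min TI2 _ H2) => z Gz.
apply: span_gen.
exists (fun a => if unlift ord_max a is Some a' then gs a' else z); split.
  by move=> a; case: (unlift ord_max a).
rewrite big_ord_recr /= unlift_none; congr (_ * _); apply: eq_bigr => a _.
by rewrite Hw liftK.
Qed.

End IdealLemmas.
Section Grading.
Variables (k : fieldType) (d m : nat).
Local Notation S := {mpoly k[d + m]}.
Local Notation PS := {poly {mpoly k[d + m]}}.

Definition rhoh (i : 'I_(d + m)) : PS := if (i < d)%N then ('X_i : S)%:P * 'X else ('X_i : S)%:P.
Definition rhof : k -> PS := polyC \o (@mpolyC (d + m) k).
Notation rho := (mmap rhof rhoh).

Lemma rho_X (mo : 'X_{1..d + m}) : rho 'X_[mo] = ('X_[mo])%:P * 'X^(xdeg mo).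
Proof.
rewrite mmapX /mmap1 big_split_ord /= [in RHS](mpolyXE_id k mo) rmorph_prod big_split_ord /=.
have hl i : rhoh (lshift m i) = ('X_(lshift m i) : S)%:P * 'X by rewrite /rhoh /= ltn_ord.
have hr i : rhoh (rshift d i) = ('X_(rshift d i) : S)%:P by rewrite /rhoh /= ltnNge leq_addr.
under eq_bigr => i _ do rewrite hl exprMn.
under [X in _ * X = _]eq_bigr => i _ do rewrite hr.
rewrite big_split /= prodrXr /xdeg -mulrA [_ * 'X^_]mulrC mulrA; congr (_ * _ * _).
  by apply: eq_bigr => i _; rewrite rmorphXn.
by apply: eq_bigr => i _; rewrite rmorphXn.
Qed.

Lemma rhoD p q : rho (p + q) = rho p + rho q. Proof. exact: mmapD. Qed.
Lemma rhoN p : rho (- p) = - rho p. Proof. exact: mmapN. Qed.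
Lemma rho0 : rho 0 = 0. Proof. exact: mmap0. Qed.
Lemma rhoM p q : rho (p * q) = rho p * rho q. Proof. exact: (rmorphM (mmap rhof rhoh)). Qed.
Lemma rho1 : rho 1 = 1. Proof. exact: (rmorph1 (mmap rhof rhoh)). Qed.

Definition xh (a : nat) (p : S) := rho p = p%:P * 'X^a.

Lemma rho_var (i : 'I_(d + m)) : rho 'X_i = rhoh i.
Proof. by rewrite mmapX mmap1U. Qed.

Lemma xh_xvar i : xh 1 (@xvar k d m i).
Proof. by rewrite /xh /xvar rho_var /rhoh /= ltn_ord expr1. Qed.

Lemma xh_Tvar j : xh 0 (@Tvar k d m j).
Proof. by rewrite /xh /Tvar rho_var /rhoh /= ltnNge leq_addr /= expr0 mulr1. Qed.

Lemma xh_bihomog a b p : bihomog a b p -> xh a p.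
Proof.
move=> H; rewrite /xh {1}/mmap.
transitivity (\sum_(mo <- msupp p) ((p@_mo *: 'X_[mo])%:P * 'X^a)).
  rewrite !big_seq; apply: eq_bigr => mo Hmo.
  rewrite -(mmapX _ rhof) rho_X; have [-> _] := H mo Hmo.
  by rewrite /rhof /= mulrA -rmorphM mul_mpolyC.
by rewrite -big_distrl -rmorph_sum -mpolyE.
Qed.

Lemma xh0 a : xh a 0.
Proof. by rewrite /xh rho0 mul0r. Qed.

Lemma xhD a p q : xh a p -> xh a q -> xh a (p + q).
Proof. by rewrite /xh rhoD => -> ->; rewrite rmorphD mulrDl. Qed.

Lemma xhN a p : xh a p -> xh a (- p).
Proof. by rewrite /xh rhoN => ->; rewrite rmorphN mulNr. Qed.

Lemma xhM a b p q : xh a p -> xh b q -> xh (a + b) (p * q).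
Proof.
rewrite /xh rhoM => -> ->; rewrite rmorphM exprD.
by rewrite -!mulrA; congr (_ * _); rewrite mulrCA.
Qed.

Lemma xhC c : xh 0 c%:MP.
Proof. by rewrite /xh mmapC /rhof /= expr0 mulr1. Qed.

Lemma xh1 : xh 0 1.
Proof. by rewrite /xh rho1 expr0 mulr1. Qed.

Lemma xhX a p e : xh a p -> xh (a * e) (p ^+ e).
Proof.
move=> H; elim: e => [|e IH]; first by rewrite muln0 expr0; exact: xh1.
by rewrite exprS mulnS; apply: xhM.
Qed.

Lemma xh_sum a I (r : seq I) (P : pred I) (F : I -> S) :
  (forall i, P i -> xh a (F i)) -> xh a (\sum_(i <- r | P i) F i).
Proof. move=> H; apply: (big_ind (xh a)); [exact: xh0| exact: xhD| exact: H]. Qed.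

Lemma xh_prod I (r : seq I) (P : pred I) (F : I -> S) (e : I -> nat) :
  (forall i, P i -> xh (e i) (F i)) ->
  xh (\sum_(i <- r | P i) e i)%N (\prod_(i <- r | P i) F i).
Proof.
move=> H; apply: (@big_ind2 nat S (fun a p => xh a p) 0%N addn 1 *%R xh1 _ I r P e F H).
by move=> ? ? ? ?; apply: xhM.
Qed.

Lemma xh_uniq a b p : xh a p -> xh b p -> a != b -> p = 0.
Proof.
rewrite /xh => -> E ab; have := congr1 (fun q : PS => q`_a) E.
rewrite !coefMXn ltnn subnn !coefC eqxx /=.
case: ltnP => [_ //|ba]; rewrite subn_eq0 leqNgt ltn_neqAle ba andbT eq_sym ab /=.
by [].
Qed.

Definition comp (e : nat) (p : S) : S := (rho p)`_e.

Lemma compD e p q : comp e (p + q) = comp e p + comp e q.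
Proof. by rewrite /comp rhoD coefD. Qed.

Lemma compN e p : comp e (- p) = - comp e p.
Proof. by rewrite /comp rhoN coefN. Qed.

Lemma compB e p q : comp e (p - q) = comp e p - comp e q.
Proof. by rewrite compD compN. Qed.

Lemma comp0 e : comp e 0 = 0.
Proof. by rewrite /comp rho0 coef0. Qed.

Lemma compMxh a e c h : xh a h ->
  comp e (c * h) = if (a <= e)%N then comp (e - a) c * h else 0.
Proof.
rewrite /comp rhoM => ->; rewrite mulrA coefMXn coefMC.
by rewrite ltnNge; case: (a <= e)%N.
Qed.

Lemma comp_xh a e h : xh a h -> comp e h = if e == a then h else 0.
Proof.
rewrite /comp => ->; rewrite coefMXn coefC subn_eq0.
case: ltngtP => //= [/ltnW -> //| ->]; by rewrite leqnn.
Qed.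
End Grading.
Lemma ideal_big (A : comNzRingType) (I0 : A -> Prop) T (r : seq T) (P : pred T) (F : T -> A) :
  is_ideal I0 -> (forall i, P i -> I0 (F i)) -> I0 (\sum_(i <- r | P i) F i).
Proof. by move=> [H0 HD HM] HF; apply: (big_ind I0). Qed.

Section Pi.
Variables (k : fieldType) (d m : nat).
Local Notation S := {mpoly k[d + m]}.
Local Notation PS := {poly {mpoly k[d + m]}}.
Local Notation rho := (mmap (@rhof k d m) (@rhoh k d m)).
Local Notation comp := (@comp k d m).
Local Notation xh := (@xh k d m).
Local Notation xideal := (@xideal k d m).

Lemma xh_X (mo : 'X_{1..d + m}) : xh (xdeg mo) 'X_[mo].
Proof. by rewrite /xh rho_X. Qed.

Lemma comp_sum e I (r : seq I) (P : pred I) (F : I -> S) :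
  comp e (\sum_(i <- r | P i) F i) = \sum_(i <- r | P i) comp e (F i).
Proof. by apply: big_morph; [exact: compD | exact: comp0]. Qed.

Lemma comp_scale e c (q : S) : comp e (c *: q) = c *: comp e q.
Proof.
rewrite -mul_mpolyC mulrC (compMxh _ _ (xhC _ _ _)) subn0 /=.
by rewrite mulrC mul_mpolyC.
Qed.

Lemma compM0 (p q : S) : comp 0 (p * q) = comp 0 p * comp 0 q.
Proof. by rewrite /comp rhoM coef0M. Qed.

Lemma xh_comp e p : xh e (comp e p).
Proof.
rewrite (mpolyE p) comp_sum; apply: xh_sum => mo _.
rewrite comp_scale (comp_xh _ (xh_X mo)).
case: eqP => [->|_]; last by rewrite scaler0; exact: xh0.
by rewrite -mul_mpolyC -[xdeg mo]add0n; apply: xhM; [exact: xhC | exact: xh_X].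
Qed.

Lemma comp0_idem p : comp 0 (comp 0 p) = comp 0 p.
Proof. by rewrite (comp_xh _ (xh_comp 0 p)). Qed.

Lemma xideal_ideal : is_ideal xideal.
Proof. exact: span_ideal. Qed.

Lemma xideal_var i : xideal (@xvar k d m i).
Proof. exact: fam_gen. Qed.

Lemma xideal_X (mo : 'X_{1..d + m}) : xdeg mo != 0%N -> xideal 'X_[mo].
Proof.
rewrite /xdeg sum_nat_eq0 negb_forall => /existsP [i /=].
rewrite -lep1mP => le1.
rewrite -(submK le1) mpolyXD mulrC.
by apply: (idealMr _ xideal_ideal); exact: xideal_var.
Qed.

Lemma sub_comp0_xideal p : xideal (p - comp 0 p).
Proof.
rewrite {1 2}(mpolyE p) comp_sum -sumrB.
apply: ideal_big; first exact: xideal_ideal.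
move=> mo _; rewrite comp_scale (comp_xh _ (xh_X mo)).
case: eqP => [E|/eqP E]; first by rewrite subrr; case: xideal_ideal.
rewrite scaler0 subr0 -mul_mpolyC.
have [_ _ HM] := xideal_ideal; apply: HM; apply: xideal_X; by rewrite eq_sym.
Qed.
End Pi.
Section Pi2.
Variables (k : fieldType) (d m : nat).
Local Notation S := {mpoly k[d + m]}.
Local Notation PS := {poly {mpoly k[d + m]}}.
Local Notation rho := (mmap (@rhof k d m) (@rhoh k d m)).
Local Notation comp := (@comp k d m).
Local Notation xh := (@xh k d m).
Local Notation xideal := (@xideal k d m).

Lemma comp0_xideal p : xideal p -> comp 0 p = 0.
Proof.
move=> Hp; apply: (span_min (I := fun p => comp 0 p = 0) _ _ Hp).
  split; first exact: comp0.
    by move=> a b /= Ha Hb; rewrite compD Ha Hb addr0.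
  by move=> r a /= Ha; rewrite compM0 Ha mulr0.
move=> f [i ->] /=; rewrite (comp_xh _ (xh_xvar k m i)) //.
Qed.

Lemma pi_det (n : nat) (N : 'M[S]_n) : comp 0 (\det N) = \det (map_mx (comp 0) N).
Proof.
have E : forall x, comp 0 x = (horner_eval 0 \o mmap (@rhof k d m) (@rhoh k d m)) x.
  by move=> x; rewrite /= horner_evalE horner_coef0.
rewrite E -det_map_mx; congr (\det _); apply/matrixP => i j; rewrite !mxE E.
by [].
Qed.

Lemma rho_det (n : nat) (N : 'M[S]_n) : rho (\det N) = \det (map_mx rho N).
Proof. by rewrite det_map_mx. Qed.

Lemma xh0_det (n : nat) (N : 'M[S]_n) : (forall i j, xh 0 (N i j)) -> xh 0 (\det N).
Proof.
move=> H; rewrite /xh rho_det expr0 mulr1.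
rewrite -det_map_mx; congr (\det _); apply/matrixP => i j; rewrite !mxE.
by rewrite (H i j) expr0 mulr1.
Qed.

Lemma det_col0 (n : nat) (N : 'M[S]_n) j : (forall i, N i j = 0) -> \det N = 0.
Proof.
move=> H; rewrite (expand_det_col _ j) big1 // => i _; by rewrite H mul0r.
Qed.

Lemma pi_det_col (n : nat) (N : 'M[S]_n) :
  (forall j, exists a, forall i, xh a (N i j)) ->
  comp 0 (\det N) = \det N \/ comp 0 (\det N) = 0.
Proof.
move=> H; rewrite pi_det.
case: (boolP [forall j, forall i, comp 0 (N i j) == N i j]) => [/forallP A|].
  left; congr (\det _); apply/matrixP => i j; rewrite mxE.
  by move/forallP: (A j) => /(_ i)/eqP.
rewrite negb_forall => /existsP [j]; rewrite negb_forall => /existsP [i0 Hi0].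
right; apply: (det_col0 (j := j)) => i; rewrite mxE.
have [a Ha] := H j.
have a0 : 0%N != a.
  apply/negP => /eqP a0; move: Hi0; rewrite (comp_xh _ (Ha i0)) -a0 eqxx /=.
  by rewrite eqxx.
by rewrite (comp_xh _ (Ha i)) (negbTE a0).
Qed.
End Pi2.
Section Sigma.
Variables (k : fieldType) (d m : nat).
Local Notation S := {mpoly k[d + m]}.

Definition sigF (i : 'I_d) (j : 'I_(d + m)) : S :=
  match split j with inl a => (a == i)%:R | inr _ => 'X_j end.
Definition sig (i : 'I_d) (p : S) : S := p \mPo [tuple sigF i j | j < d + m].

Lemma sigM i p q : sig i (p * q) = sig i p * sig i q.
Proof. by rewrite /sig rmorphM. Qed.
Lemma sigD i p q : sig i (p + q) = sig i p + sig i q.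
Proof. by rewrite /sig rmorphD. Qed.
Lemma sig_sum i (n : nat) (F : 'I_n -> S) : sig i (\sum_(j < n) F j) = \sum_(j < n) sig i (F j).
Proof. by rewrite /sig rmorph_sum. Qed.

Lemma sig_xvar i l : sig i (@xvar k d m l) = (l == i)%:R.
Proof.
rewrite /sig /xvar comp_mpolyX.
rewrite (bigD1 (lshift m l)) //= big1 ?mulr1.
  by rewrite tnth_mktuple mnm1E eqxx expr1 /sigF (unsplitK (inl _ l)).
move=> j jn; rewrite mnm1E; case: eqP => [E|_]; last by rewrite expr0.
by move: jn; rewrite E eqxx.
Qed.

Lemma sig_xdeg0 i p : (forall mo, mo \in msupp p -> xdeg mo = 0%N) -> sig i p = p.
Proof.
move=> H; rewrite /sig comp_mpolyEX [in RHS](mpolyE p) !big_seq; apply: eq_bigr => mo Hmo.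
congr (_ *: _); rewrite comp_mpolyX [in RHS](mpolyXE_id k mo) !big_split_ord /=.
have Hx : forall a, mo (lshift m a) = 0%N.
  move=> a; have := H mo Hmo; rewrite /xdeg => /eqP; rewrite sum_nat_eq0.
  by move/forallP => /(_ a) /eqP.
congr (_ * _).
  by apply: eq_bigr => a _; rewrite !Hx !expr0.
apply: eq_bigr => b _; rewrite tnth_mktuple /sigF (unsplitK (inr _ b)).
by [].
Qed.

Lemma bihomog0_xdeg0 b (p : S) : bihomog 0 b p -> forall mo, mo \in msupp p -> xdeg mo = 0%N.
Proof. by move=> H mo /H []. Qed.

Lemma xcol_inj (v w : 'I_d -> S) :
  (forall l mo, mo \in msupp (v l) -> xdeg mo = 0%N) ->
  (forall l mo, mo \in msupp (w l) -> xdeg mo = 0%N) ->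
  \sum_(l < d) @xvar k d m l * v l = \sum_(l < d) @xvar k d m l * w l ->
  forall l, v l = w l.
Proof.
move=> Hv Hw E i; have := congr1 (sig i) E; rewrite !sig_sum.
under eq_bigr => l _ do rewrite sigM sig_xvar (sig_xdeg0 _ (Hv l)).
under [in RHS]eq_bigr => l _ do rewrite sigM sig_xvar (sig_xdeg0 _ (Hw l)).
rewrite (bigD1 i) //= [in RHS](bigD1 i) //= !big1 ?eqxx ?mul1r ?addr0 //.
  by move=> l /negbTE ->; rewrite mul0r.
by move=> l /negbTE ->; rewrite mul0r.
Qed.
End Sigma.
Section Main.
Variables (k : fieldType) (d m n : nat) (hd : (0 < d)%N).
Local Notation S := {mpoly k[d + m]}.
Local Notation R := {mpoly k[d]}.
Local Notation comp := (@comp k d m).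
Local Notation xh := (@xh k d m).
Local Notation xideal := (@xideal k d m).
Local Notation xv := (@xvar k d m).
Variables (phi' : 'M[R]_(m, m - 2)) (v : 'cV[R]_m).
Hypothesis n1 : (1 <= n)%N.
Hypothesis hv : forall i, std_homog n (v i 0).
Variable Bp : 'M[S]_(d, m - 2).
Hypothesis hBp : forall i j, bihomog 0 1 (Bp i j).
Hypothesis hxB : @xvec k d m *m Bp = @Tvec k d m *m map_mx (@incl_RS k d m) phi'.

Definition Lgen j := (@Tvec k d m *m map_mx (@incl_RS k d m) phi') 0 j.
Definition Lp := fam_ideal Lgen.
Definition g := (@Tvec k d m *m map_mx (@incl_RS k d m) v) 0 0.
Definition L := ideal_add Lp (fun f => f = g).
Definition J := ideal_add Lp (minors_ideal d Bp).
Definition lo := last_ord hd.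
Definition xd := xv lo.
Definition Dgen (f : S) := exists (ri : 'I_d.-1 -> 'I_d.-1) (ci : 'I_d.-1 -> 'I_(m - 2)),
    [/\ injective ri, injective ci &
        f = \det (\matrix_(i, j) (row' lo Bp) (ri i) (ci j))].
Definition W (c : nat) (B : 'M[S]_(d, c)) := ideal_add L (minors_ideal d B).

Lemma xM_entry (c : nat) (M : 'M[S]_(d, c)) s :
  (@xvec k d m *m M) 0 s = \sum_(a < d) xv a * M a s.
Proof. by rewrite mxE; apply: eq_bigr => a _; rewrite mxE. Qed.

Lemma Lgen_x j : Lgen j = \sum_(a < d) xv a * Bp a j.
Proof. by rewrite /Lgen -hxB xM_entry. Qed.

Lemma xh_Bp i j : xh 0 (Bp i j).
Proof. exact: (xh_bihomog (@hBp i j)). Qed.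

Lemma xh_Lgen j : xh 1 (Lgen j).
Proof.
rewrite Lgen_x; apply: xh_sum => a _.
exact: (xhM (xh_xvar k m a) (xh_Bp a j)).
Qed.

Lemma xh_incl (p : R) : std_homog n p -> xh n (@incl_RS k d m p).
Proof.
move=> H; rewrite /incl_RS comp_mpolyE; rewrite big_seq; apply: xh_sum => mo Hmo.
rewrite -mul_mpolyC.
set P := (X in _ * X).
suff Hp : xh n P by have := xhM (xhC d m (p@_mo)) Hp; rewrite add0n.
rewrite /P -(H mo Hmo) mdegE.
have -> : (\sum_(i < d) mo i = \sum_(i < d) 1 * mo i)%N by apply: eq_bigr => i _; rewrite mul1n.
apply: xh_prod => i _; rewrite tnth_mktuple; apply: xhX; exact: xh_xvar.
Qed.

Lemma xh_g : xh n g.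
Proof.
rewrite /g mxE; apply: xh_sum => a _; rewrite !mxE /=.
exact: (xhM (xh_Tvar k d a) (xh_incl (@hv a))).
Qed.

Lemma xh_xd : xh 1 xd.
Proof. exact: xh_xvar. Qed.

Lemma xh_Dgen f : Dgen f -> xh 0 f.
Proof.
move=> [ri [ci [_ _ ->]]]; apply: xh0_det => a b; rewrite !mxE; exact: xh_Bp.
Qed.

Lemma comp_span (G I : S -> Prop) e f :
  (forall f, G f -> exists a, xh a f) -> (forall f, G f -> I f) -> is_ideal I ->
  ideal_span G f -> I (comp e f).
Proof.
move=> HG HGI HI [N [c [gs [Hg ->]]]].
rewrite comp_sum; apply: ideal_big => // i _.
have [a Ha] := HG _ (Hg i).
rewrite (compMxh _ _ Ha); case: (a <= e)%N.
  by case: HI => _ _ HM; apply: HM; apply: HGI.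
by case: HI.
Qed.

Lemma J_ideal : is_ideal J.
Proof. exact: span_ideal. Qed.

Lemma Lgen_J j : J (Lgen j).
Proof. by apply: add_l; apply: fam_gen. Qed.

Definition GJ (f : S) := (exists j, f = Lgen j) \/
  (exists (ri : 'I_d -> 'I_d) (ci : 'I_d -> 'I_(m - 2)),
    [/\ injective ri, injective ci & f = \det (\matrix_(i, j) Bp (ri i) (ci j))]).

Lemma J_span f : J f -> ideal_span GJ f.
Proof.
apply: span_min; first exact: span_ideal.
move=> x [Hx|Hx].
  apply: (span_min _ _ Hx); first exact: span_ideal.
  by move=> y [j ->]; apply: span_gen; left; exists j.
apply: (span_min _ _ Hx); first exact: span_ideal.
by move=> y Hy; apply: span_gen; right.
Qed.

Lemma comp_J e f : J f -> J (comp e f).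
Proof.
move=> /J_span; apply: comp_span; last exact: J_ideal.
  move=> x [[j ->]|[ri [ci [_ _ ->]]]]; first by exists 1%N; exact: xh_Lgen.
  by exists 0%N; apply: xh0_det => a b; rewrite mxE; exact: xh_Bp.
move=> x [[j ->]|Hx]; first exact: Lgen_J.
by apply: add_r; apply: span_gen.
Qed.

Definition colok (c : nat) (M : 'M[S]_(d, c)) :=
  forall j, (col j Bp == 0) || [exists t, col t M == col j Bp].

Lemma core_gen c (M : 'M[S]_(d, c)) t f : colok M -> Dgen f ->
  exists w', minors_ideal d M w' /\ J ((@xvec k d m *m M) 0 t * f - xd * w').
Proof.
move=> HM [ri [ci [ri_inj ci_inj ->]]].
case: (boolP [exists b, col (ci b) Bp == 0]) => [/existsP [b /eqP Hb] | Hall].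
  exists 0; split; first exact: span0.
  rewrite (det_col0 (j := b)); last first.
    move=> a; rewrite !mxE.
    by have := congr1 (fun X : 'M[S]_(d, 1) => X (lift lo (ri a)) ord0) Hb; rewrite !mxE.
  by rewrite !mulr0 subr0; exact: span0.
have Hall' : forall b, col (ci b) Bp != 0.
  by move=> b; apply/negP => Hb; move: Hall; rewrite negb_exists => /forallP /(_ b); rewrite Hb.
pose tb b := odflt t [pick s | col s M == col (ci b) Bp].
have Htb b : col (tb b) M = col (ci b) Bp.
  rewrite /tb; case: pickP => [s /eqP //| H0].
  by move: (HM (ci b)); rewrite (negbTE (Hall' b)) /= => /existsP [s Hs]; rewrite H0 in Hs.
pose ri' (a : 'I_d) : 'I_d := if unlift lo a is Some a' then lift lo (ri a') else lo.
pose ci' (b : 'I_d) : 'I_c := if unlift lo b is Some b' then tb b' else t.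
have ri'lo : ri' lo = lo by rewrite /ri' unlift_none.
have ri'lift a : ri' (lift lo a) = lift lo (ri a) by rewrite /ri' liftK.
have ci'lo : ci' lo = t by rewrite /ci' unlift_none.
have ci'lift b : ci' (lift lo b) = tb b by rewrite /ci' liftK.
have ri'_inj : injective ri'.
  move=> a1 a2; case: (unliftP lo a1) => [a1' ->|->]; case: (unliftP lo a2) => [a2' ->|->] //.
  - by rewrite !ri'lift => /lift_inj/ri_inj ->.
  - by rewrite ri'lift ri'lo => E; have := neq_lift lo (ri a1'); rewrite E eqxx.
  - by rewrite ri'lift ri'lo => E; have := neq_lift lo (ri a2'); rewrite -E eqxx.
pose N := \matrix_(a, b) M (ri' a) (ci' b).
exists (\det N); split.
  case: (boolP [forall b1, forall b2, (ci' b1 == ci' b2) ==> (b1 == b2)]) => [/forallP Hinj|].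
    apply: span_gen; exists ri', ci'; split => //.
    by move=> b1 b2 E; move: (Hinj b1) => /forallP /(_ b2) /implyP; rewrite E eqxx => /(_ isT) /eqP.
  rewrite negb_forall => /existsP [b1]; rewrite negb_forall => /existsP [b2].
  rewrite negb_imply => /andP [/eqP E ne].
  have -> : \det N = 0.
    rewrite -det_tr; apply: (determinant_alternate ne) => a; by rewrite !mxE E.
  exact: span0.
pose y := \row_a xv (ri' a).
have yN b : (y *m N) 0 b = (@xvec k d m *m M) 0 (ci' b).
  rewrite [RHS]mxE (reindex_inj ri'_inj) /= mxE; apply: eq_bigr => a _; by rewrite !mxE.
have key : \sum_(b < d) (@xvec k d m *m M) 0 (ci' b) * \adj N b lo = \det N * xd.
  have := congr1 (fun X : 'M[S]_(1, d) => X ord0 lo) (mulmxA y N (\adj N)).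
  rewrite mul_mx_adj mul_mx_scalar !mxE ri'lo => ->.
  by apply: eq_bigr => b _; rewrite yN.
have Hadj : \adj N lo lo = \det (\matrix_(i, j) (row' lo Bp) (ri i) (ci j)).
  rewrite mxE /cofactor -signr_odd addnn odd_double expr0 mul1r.
  congr (\det _); apply/matrixP => a b; rewrite !mxE ri'lift ci'lift.
  by have := congr1 (fun X : 'M[S]_(d, 1) => X (lift lo (ri a)) ord0) (Htb b); rewrite !mxE.
move: key; rewrite (bigD1 lo) //= ci'lo Hadj => key.
have HJ : J (\sum_(b < d | b != lo) (@xvec k d m *m M) 0 (ci' b) * \adj N b lo).
  apply: ideal_big; first exact: J_ideal.
  move=> b; case: (unliftP lo b) => [b' ->|->]; last by rewrite eqxx.
  move=> _; rewrite ci'lift; apply: idealMr; first exact: J_ideal.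
  have -> : (@xvec k d m *m M) 0 (tb b') = Lgen (ci b').
    rewrite Lgen_x xM_entry; apply: eq_bigr => a _.
    by have := congr1 (fun X : 'M[S]_(d, 1) => X a ord0) (Htb b'); rewrite !mxE => ->.
  exact: Lgen_J.
have -> : (@xvec k d m *m M) 0 t * \det (\matrix_(i, j) (row' lo Bp) (ri i) (ci j)) - xd * \det N
   = - \sum_(b < d | b != lo) (@xvec k d m *m M) 0 (ci' b) * \adj N b lo.
  by rewrite [xd * _]mulrC -key opprD addrA subrr add0r.
by rewrite -mulN1r; case: J_ideal => _ _ HMJ; apply: HMJ.
Qed.

Lemma Lof_ideal c (M : 'M[S]_(d, c)) : is_ideal (Lof M).
Proof. exact: span_ideal. Qed.

Lemma core_span c (M : 'M[S]_(d, c)) f w : colok M -> Dgen f -> Lof M w ->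
  exists w', minors_ideal d M w' /\ J (w * f - xd * w').
Proof.
move=> HM Hf Hw.
have HI : is_ideal (fun w => exists w', minors_ideal d M w' /\ J (w * f - xd * w')).
  split.
  - by exists 0; split; [exact: span0 | rewrite mul0r mulr0 subr0; exact: span0].
  - move=> a b [wa [Ha Ja]] [wb [Hb Jb]]; exists (wa + wb); split; first exact: spanD.
    have -> : (a + b) * f - xd * (wa + wb) = (a * f - xd * wa) + (b * f - xd * wb) by ring.
    by case: J_ideal => _ HD _; apply: HD.
  - move=> r a [wa [Ha Ja]]; exists (r * wa); split; first exact: spanM.
    have -> : r * a * f - xd * (r * wa) = r * (a * f - xd * wa) by ring.
    by case: J_ideal => _ _ HMJ; apply: HMJ.
apply: (span_min HI _ Hw) => x [t ->]; exact: core_gen.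
Qed.

Lemma xh_xideal a p : xh a p -> (0 < a)%N -> xideal p.
Proof.
move=> H a0; have := sub_comp0_xideal p; rewrite (comp_xh _ H).
by case: eqP => [E|_]; [move: a0; rewrite -E | rewrite subr0].
Qed.

Definition colxh c (M : 'M[S]_(d, c)) := forall j, exists a, forall i, xh a (M i j).

Lemma pi_minors c (M : 'M[S]_(d, c)) w : colxh M -> minors_ideal d M w -> minors_ideal d M (comp 0 w).
Proof.
move=> HM [N [cs [gs [Hg ->]]]].
rewrite comp_sum; apply: ideal_sum; first exact: span_ideal.
move=> i; rewrite compM0; apply: spanM.
have [ri [ci [ri_inj ci_inj E]]] := Hg i.
have Hc : forall j, exists a, forall i0, xh a ((\matrix_(i1, j1) M (ri i1) (ci j1)) i0 j).
  by move=> j; have [a Ha] := HM (ci j); exists a => i0; rewrite mxE.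
rewrite E; case: (pi_det_col Hc) => ->; last exact: span0.
by apply: span_gen; exists ri, ci.
Qed.

Lemma delta_step c (M : 'M[S]_(d, c)) i P e w f :
  colok M -> colxh M -> Dgen f -> Lof M w -> J (g * P - xd ^+ i * w) -> xh e P ->
  exists w2, W M w2 /\ J (g * (P * f) - xd ^+ i.+1 * w2) /\ ((i.+1 < n)%N -> xideal w2).
Proof.
move=> HM HMx Hf Hw HJ HP.
have [w' [Hw' Jw']] := core_span HM Hf Hw.
have HE : J (g * (P * f) - xd ^+ i.+1 * w').
  have -> : g * (P * f) - xd ^+ i.+1 * w' = (g * P - xd ^+ i * w) * f + xd ^+ i * (w * f - xd * w').
    by rewrite exprS; ring.
  case: J_ideal => _ HD HMJ; apply: HD; first exact: idealMr J_ideal HJ.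
  exact: HMJ.
case: (ltnP i.+1 n) => [lt|ge]; last first.
  exists w'; split; [exact: add_r | split => // lt]; by move: ge; rewrite leqNgt lt.
exists (w' - comp 0 w'); split; last split.
- apply: add_r; apply: idealB; [exact: span_ideal | exact: Hw' | exact: pi_minors].
- have HC := comp_J i.+1 HE.
  rewrite compB in HC.
  have Hx : xh i.+1 (xd ^+ i.+1) by have := xhX i.+1 xh_xd; rewrite mul1n.
  have Hg : xh (n + (e + 0)) (g * (P * f)) by apply: xhM xh_g (xhM HP (xh_Dgen Hf)).
  rewrite (comp_xh _ Hg) [xd ^+ _ * w']mulrC (compMxh _ _ Hx) leqnn subnn in HC.
  move: HC; case: eqP => [E|_] HC.
    by move: lt; rewrite E ltnNge leq_addr.
  have -> : g * (P * f) - xd ^+ i.+1 * (w' - comp 0 w')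
      = (g * (P * f) - xd ^+ i.+1 * w') - (0 - comp 0 w' * xd ^+ i.+1) by ring.
  by apply: idealB; [exact: J_ideal | exact: HE | ].
- by move=> _; exact: sub_comp0_xideal.
Qed.

Definition G0 (f : S) := (exists j, f = Lgen j) \/ Dgen f \/ f = xd.

Lemma xh_G0 f : G0 f -> exists a, xh a f.
Proof.
case=> [[j ->]|[Hf| ->]]; [exists 1%N; exact: xh_Lgen | exists 0%N; exact: xh_Dgen Hf | exists 1%N; exact: xh_xd].
Qed.

Lemma prod_G0_xh N (fs : 'I_N -> S) : (forall a, G0 (fs a)) -> exists e, xh e (\prod_(a < N) fs a).
Proof.
elim: N fs => [|N IH] fs H; first by exists 0%N; rewrite big_ord0; exact: xh1.
rewrite big_ord_recr /=.
have [e1 H1] := IH (fun a => fs (widen_ord (leqnSn N) a)) (fun a => H _).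
have [e2 H2] := xh_G0 (H ord_max).
by exists (e1 + e2)%N; apply: xhM.
Qed.

Definition Inv c (B : 'M[S]_(d, c)) := [/\ colok B, colxh B & forall f, L f -> Lof B f].
Definition Q i c (B : 'M[S]_(d, c)) := forall fs : 'I_i -> S, (forall a, G0 (fs a)) ->
  exists w, W B w /\ J (g * \prod_(a < i) fs a - xd ^+ i * w) /\ ((i < n)%N -> xideal w).

Lemma ord_split c l (s : 'I_(c + l)) : (exists t, s = lshift l t) \/ (exists t, s = rshift c t).
Proof. by rewrite -(splitK s); case: (split s) => t; [left|right]; exists t. Qed.

Lemma Lof_xideal c (B : 'M[S]_(d, c)) f : Lof B f -> xideal f.
Proof.
apply: span_min; first exact: xideal_ideal.
move=> x [t ->]; rewrite xM_entry; apply: ideal_sum; first exact: xideal_ideal.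
move=> a; apply: idealMr; first exact: xideal_ideal.
exact: xideal_var.
Qed.

Lemma xrow_mxl c l (B : 'M[S]_(d, c)) (C : 'M[S]_(d, l)) t :
  (@xvec k d m *m row_mx B C) 0 (lshift l t) = (@xvec k d m *m B) 0 t.
Proof. by rewrite mul_mx_row row_mxEl. Qed.

Lemma xrow_mxr c l (B : 'M[S]_(d, c)) (C : 'M[S]_(d, l)) t :
  (@xvec k d m *m row_mx B C) 0 (rshift c t) = (@xvec k d m *m C) 0 t.
Proof. by rewrite mul_mx_row row_mxEr. Qed.

Lemma Lof_mono c l (B : 'M[S]_(d, c)) (C : 'M[S]_(d, l)) f : Lof B f -> Lof (row_mx B C) f.
Proof.
apply: span_min; first exact: span_ideal.
by move=> x [t ->]; rewrite -(xrow_mxl B C); apply: fam_gen.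
Qed.

Lemma minors_mono c l (B : 'M[S]_(d, c)) (C : 'M[S]_(d, l)) f :
  minors_ideal d B f -> minors_ideal d (row_mx B C) f.
Proof.
apply: span_min; first exact: span_ideal.
move=> x [ri [ci [ri_inj ci_inj ->]]]; apply: span_gen.
exists ri, (fun j => lshift l (ci j)); split => //.
  by move=> j1 j2 /lshift_inj/ci_inj.
by congr (\det _); apply/matrixP => a b; rewrite [LHS]mxE [RHS]mxE row_mxEl.
Qed.

Lemma W_mono c l (B : 'M[S]_(d, c)) (C : 'M[S]_(d, l)) f : W B f -> W (row_mx B C) f.
Proof.
apply: span_min; first exact: span_ideal.
move=> x [Hx|Hx]; [exact: add_l | apply: add_r; exact: minors_mono].
Qed.

Lemma Inv_step c l (B : 'M[S]_(d, c)) (C : 'M[S]_(d, l)) :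
  Inv B -> col_bihomog C -> Inv (row_mx B C).
Proof.
move=> [HB1 HB2 HB3] HC; split.
- move=> j; case/orP: (HB1 j) => [->//|/existsP [t /eqP Ht]].
  apply/orP; right; apply/existsP; exists (lshift l t); apply/eqP.
  by rewrite -Ht; apply/matrixP => a z; rewrite [LHS]mxE [RHS]mxE row_mxEl.
- move=> s; case: (ord_split s) => [[t ->]|[t ->]].
    by have [a Ha] := HB2 t; exists a => i; rewrite row_mxEl.
  have [a [b Hab]] := HC t; exists a => i; rewrite row_mxEr.
  exact: xh_bihomog (Hab i).
- by move=> f /HB3; apply: Lof_mono.
Qed.

Lemma L_ideal : is_ideal L.
Proof. exact: span_ideal. Qed.

Lemma W_ideal c (B : 'M[S]_(d, c)) : is_ideal (W B).
Proof. exact: span_ideal. Qed.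

Lemma g_L : L g.
Proof. exact: add_r. Qed.

Lemma Inv_base (B1 : 'M[S]_(d, m - 2 + 1)) : col_bihomog B1 ->
  @xvec k d m *m B1 = @Tvec k d m *m map_mx (@incl_RS k d m) (row_mx phi' v) -> Inv B1.
Proof.
move=> HB1 Hx.
have HxB1 : @xvec k d m *m B1 = row_mx (@Tvec k d m *m map_mx (@incl_RS k d m) phi')
                                     (@Tvec k d m *m map_mx (@incl_RS k d m) v).
  by rewrite Hx map_row_mx mul_mx_row.
have E1 j : (@xvec k d m *m B1) 0 (lshift 1 j) = Lgen j by rewrite HxB1 row_mxEl.
have E2 : (@xvec k d m *m B1) 0 (rshift (m - 2) 0) = g by rewrite HxB1 row_mxEr.
split.
- move=> j; have [a [b Hab]] := HB1 (lshift 1 j).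
  have Esum : \sum_(l < d) xv l * B1 l (lshift 1 j) = \sum_(l < d) xv l * Bp l j.
    by rewrite -xM_entry E1 Lgen_x.
  have HwBp : forall l mo, mo \in msupp (Bp l j) -> xdeg mo = 0%N.
    by move=> l; apply: bihomog0_xdeg0 (@hBp l j).
  case: (eqVneq a 0%N) => [a0|a0].
    apply/orP; right; apply/existsP; exists (lshift 1 j); apply/eqP/matrixP => i z.
    rewrite !mxE; apply: (xcol_inj (v := fun l => B1 l (lshift 1 j)) (w := fun l => Bp l j)) => //.
    by subst a; move=> l; apply: bihomog0_xdeg0; exact: Hab.
  have H1 : xh (1 + a) (Lgen j).
    rewrite -E1 xM_entry; apply: xh_sum => l _; apply: xhM; first exact: xh_xvar.
    exact: xh_bihomog (Hab l).
  have L0 : Lgen j = 0.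
    have ne : (1 + a)%N != 1%N by rewrite add1n eqSS.
    exact: (xh_uniq H1 (xh_Lgen j) ne).
  have E0 : \sum_(l < d) xv l * Bp l j = \sum_(l < d) xv l * (fun _ => (0 : S)) l.
    by rewrite -Lgen_x L0 big1 // => l _; rewrite mulr0.
  apply/orP; left; apply/eqP/matrixP => i z; rewrite !mxE.
  by apply: (xcol_inj (v := fun l => Bp l j) (w := fun _ => (0 : S))) => // l mo; rewrite msupp0.
- move=> j; have [a [b Hab]] := HB1 j; exists a => i; exact: xh_bihomog (Hab i).
- apply: span_min; first exact: span_ideal.
  move=> x [Hx'|->]; last by rewrite -E2; apply: fam_gen.
  apply: (span_min _ _ Hx'); first exact: span_ideal.
  by move=> y [j ->]; rewrite -E1; apply: fam_gen.
Qed.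

Lemma Q_base (B1 : 'M[S]_(d, m - 2 + 1)) : Inv B1 -> Q 1 B1.
Proof.
move=> [HB1 HB2 HB3] fs H; rewrite big_ord1 expr1.
case: (H ord0) => [[j ->]|[Hf|->]].
- exists 0; split; first exact: span0.
  split; last by move=> _; exact: span0.
  rewrite mulr0 subr0 mulrC; apply: (idealMr _ J_ideal); exact: Lgen_J.
- have := @delta_step _ B1 0%N 1 0%N g _ HB1 HB2 Hf (HB3 _ g_L).
  rewrite mulr1 expr0 mul1r subrr mul1r expr1; apply; [exact: span0 | exact: xh1].
- exists g; split; first exact: add_l g_L.
  split; first by rewrite mulrC subrr; exact: span0.
  by move=> _; apply: (xh_xideal xh_g).
Qed.

Lemma lof_step c l (B : 'M[S]_(d, c)) (u : 'I_l -> S) (C : 'M[S]_(d, l)) w :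
  Inv B ->
  (forall f, ideal_add (Lof B) (fun f => minors_ideal d B f /\ xideal f) f <->
             ideal_add (Lof B) (fam_ideal u) f) ->
  (forall j, (@xvec k d m *m C) 0 j = u j) -> W B w -> xideal w -> Lof (row_mx B C) w.
Proof.
move=> [_ _ HL] Hiff HC HW Hx.
have [a [b [Ha Hb Ew]]] := add_decomp L_ideal (span_ideal _) HW; subst w.
have Hla : Lof B a := HL a Ha.
have Hbx : xideal b.
  have H2 := idealB (xideal_ideal k d m) Hx (Lof_xideal Hla).
  by move: H2; rewrite addrAC subrr add0r.
have H1 : ideal_add (Lof B) (fun f => minors_ideal d B f /\ xideal f) (a + b).
  exact: (spanD (add_l _ Hla) (add_r _ (conj Hb Hbx))).
move/Hiff: H1; apply: span_min; first exact: span_ideal.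
move=> x [Hx'|Hx']; first exact: Lof_mono.
apply: (span_min _ _ Hx'); first exact: span_ideal.
by move=> y [j ->]; rewrite -HC -(xrow_mxr B C); apply: fam_gen.
Qed.

Lemma Q_step i c l (B : 'M[S]_(d, c)) (u : 'I_l -> S) (C : 'M[S]_(d, l)) :
  Inv B -> Q i B -> (i.+1 <= n)%N ->
  (forall f, ideal_add (Lof B) (fun f => minors_ideal d B f /\ xideal f) f <->
             ideal_add (Lof B) (fam_ideal u) f) ->
  (forall j, (@xvec k d m *m C) 0 j = u j) -> col_bihomog C -> Q i.+1 (row_mx B C).
Proof.
move=> HI HQ Hin Hiff HCu HCb fs H.
have [HI1 HI2 HI3] := Inv_step HI HCb.
rewrite big_ord_recr /=.
have [w [HW [HJ Hx]]] := HQ (fun a => fs (widen_ord (leqnSn i) a)) (fun a => H _).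
have Hxw : xideal w := Hx Hin.
case: (H ord_max) => [[j ->]|[Hf|->]].
- exists 0; split; first exact: span0.
  split; last by move=> _; exact: span0.
  rewrite mulr0 subr0 mulrA; case: J_ideal => _ _ HMJ; apply: HMJ; exact: Lgen_J.
- have [eP HP] := prod_G0_xh (fun a => H (widen_ord (leqnSn i) a)).
  apply: (delta_step HI1 HI2 Hf _ HJ HP).
  exact: lof_step HI Hiff HCu HW Hxw.
- exists w; split; first exact: W_mono.
  split; last by move=> _.
  have -> : g * (\prod_(a < i) fs (widen_ord (leqnSn i) a) * xd) - xd ^+ i.+1 * w
     = (g * \prod_(a < i) fs (widen_ord (leqnSn i) a) - xd ^+ i * w) * xd by rewrite exprS; ring.
  exact: idealMr J_ideal HJ.
Qed.

Lemma main_ind i c (B : 'M[S]_(d, c)) : IJD (row_mx phi' v) i B -> Inv B /\ ((i <= n)%N -> Q i B).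
Proof.
elim=> [B1 Hb Hx | i' c' B' l u C HB [HI HQ] Hu Hiff HCb HCu].
  have HI := Inv_base Hb Hx; split => // _; exact: Q_base.
split; first exact: Inv_step.
move=> Hin; apply: (Q_step HI _ Hin Hiff HCu HCb); apply: HQ; exact: ltnW.
Qed.

Definition K := ideal_add (ideal_add Lp (minors_ideal d.-1 (row' lo Bp))) (fun f => f = xd).

Lemma K_span f : K f -> ideal_span G0 f.
Proof.
apply: span_min; first exact: span_ideal.
move=> x [Hx| ->]; last by apply: span_gen; right; right.
apply: (span_min _ _ Hx); first exact: span_ideal.
move=> y [Hy|Hy].
  apply: (span_min _ _ Hy); first exact: span_ideal.
  by move=> z [j ->]; apply: span_gen; left; exists j.
apply: (span_min _ _ Hy); first exact: span_ideal.
by move=> z Hz; apply: span_gen; right; left.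
Qed.

Lemma final c (Bn : 'M[S]_(d, c)) : IJD (row_mx phi' v) n Bn ->
  forall u, ideal_pow K n u ->
  exists w, ideal_add L (minors_ideal d Bn) w /\ J (g * u - xd ^+ n * w).
Proof.
move=> HI u Hu.
have [_ HQ] := main_ind HI; have Qn := HQ (leqnn n).
have TI : is_ideal (fun u => exists w, ideal_add L (minors_ideal d Bn) w /\ J (g * u - xd ^+ n * w)).
  split.
  - by exists 0; split; [exact: span0 | rewrite !mulr0 subr0; exact: span0].
  - move=> a b [wa [Ha Ja]] [wb [Hb Jb]]; exists (wa + wb); split; first exact: spanD.
    have -> : g * (a + b) - xd ^+ n * (wa + wb) = (g * a - xd ^+ n * wa) + (g * b - xd ^+ n * wb) by ring.
    by case: J_ideal => _ HD _; apply: HD.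
  - move=> r a [wa [Ha Ja]]; exists (r * wa); split; first exact: spanM.
    have -> : g * (r * a) - xd ^+ n * (r * wa) = r * (g * a - xd ^+ n * wa) by ring.
    by case: J_ideal => _ _ HMJ; apply: HMJ.
apply: (span_min TI _ Hu) => f [ks [Hks ->]].
have Hp := prod_span (fun a => K_span (Hks a)).
apply: (span_min TI _ Hp) => x [gs [Hgs ->]].
by have [w [HW [HJ _]]] := Qn gs Hgs; exists w.
Qed.
End Main.

Unset Implicit Arguments.

Theorem theorem4p7 (k : fieldType) (d m n : nat) (hd : (0 < d)%N)
    (alpha : 'rV[{mpoly k[d]}]_m)
    (phi' : 'M[{mpoly k[d]}]_(m, m - 2)) (v : 'cV[{mpoly k[d]}]_m) :
  (d < m)%N -> (1 <= n)%N ->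
  (forall i j, std_homog 1 (phi' i j)) ->
  (forall i, std_homog n (v i 0)) ->
  HB_perfect_ht2 alpha (row_mx phi' v) ->
  G_cond d (fun i => alpha 0 i) ->
  forall Bp : 'M[{mpoly k[d + m]}]_(d, m - 2),
  (forall i j, bihomog 0 1 (Bp i j)) ->
  @xvec k d m *m Bp = @Tvec k d m *m map_mx (@incl_RS k d m) phi' ->
  let Lp := fam_ideal (fun j => (@Tvec k d m *m map_mx (@incl_RS k d m) phi') 0 j) in
  let g := (@Tvec k d m *m map_mx (@incl_RS k d m) v) 0 0 in
  let L := ideal_add Lp (fun f => f = g) in
  let J := ideal_add Lp (minors_ideal d Bp) in
  let xd := @xvar k d m (last_ord hd) in
  let K := ideal_add (ideal_add Lp (minors_ideal d.-1 (row' (last_ord hd) Bp)))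
                     (fun f => f = xd) in
  forall c (Bn : 'M[{mpoly k[d + m]}]_(d, c)),
    IJD (row_mx phi' v) n Bn ->
    forall u, ideal_pow K n u ->
      exists w, ideal_add L (minors_ideal d Bn) w /\ J (g * u - xd ^+ n * w).
Proof.
move=> Hdm Hn1 Hphi Hv HHB HG Bp HBp HxB Lp0 g0 L0 J0 xd0 K0 c Bn HI u Hu.
exact: (final Hn1 Hv HBp HxB HI Hu).
Qed.
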